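(* Let $q$ be a power of an odd prime, write $q-1=2^s r$ with $r$ odd, let $c\in\mathbb{F}_q^*$, and $f(X)=c(X^{q+1}+X^2)$ on $\mathbb{F}_{q^2}$. Then for every divisor $d\neq1$ of $r$ there are $\frac{q\,\varphi(d)}{\mathrm{ord}_d(2)}$ cycles of length $\mathrm{ord}_d(2)$ in the functional graph of $f$, and these are all the cycles of length greater than $1$. For $d=1$ there are $\frac{q\,\varphi(1)}{\mathrm{ord}_1(2)}+1=q+1$ cycles of length $\mathrm{ord}_1(2)=1$.
   Context: The functional graph of $f$ is the directed graph on $\mathbb{F}_{q^2}$ with edges $x\to f(x)$. $\varphi$ is Euler's totient function and $\mathrm{ord}_m(n)$ is the multiplicative order of $n$ modulo $m$. *)

(* Defs.v *)
From mathcomp Require Import all_boot all_order all_algebra all_fingroup all_solvable all_field.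
Set Implicit Arguments. Unset Strict Implicit. Unset Printing Implicit Defensive.
Import GRing.Theory.

(* Multiplicative order of a modulo m: least k > 0 with a^k = 1 (mod m).
   Only meaningful when coprime a m (then it exists by Euler); if a and m
   are not coprime it is defaulted to 1. *)
Definition mult_order_pred (m a : nat) : pred nat :=
  fun k => (0 < k) && (~~ coprime a m || (a ^ k == 1 %[mod m])).

Lemma mult_order_ex m a : exists k, mult_order_pred m a k.
Proof.
rewrite /mult_order_pred.
case: (boolP (coprime a m)) => cop; last by exists 1.
case: m cop => [|m] cop.
  by exists 1; rewrite /= /coprime gcdn0 in cop *; rewrite (eqP cop).
exists (totient m.+1); rewrite totient_gt0 /=.
by apply/eqP; apply: Euler_exp_totient.
Qed.

Definition mult_order (m a : nat) : nat := ex_minn (mult_order_ex m a).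

Definition fcycles (T : finType) (f : T -> T) : {set {set T}} :=
  [set C : {set T} | [exists x, fconnect f (f x) x && (C == [set y in fingraph.orbit f x])]].

Definition fcycles_of_length (T : finType) (f : T -> T) (n : nat) : {set {set T}} :=
  [set C in fcycles f | #|C| == n].

(* Main.v *)
Require Import Defs.
From mathcomp Require Import all_boot all_order all_algebra all_fingroup all_solvable all_field.
From mathcomp Require Import ring zify.
Import GRing.Theory FinRing.Theory.
Set Implicit Arguments. Unset Strict Implicit.

Section General.
Variables (T : finType) (f : T -> T).

Lemma order_le_iter x m : 0 < m -> iter m f x = x -> fingraph.order f x <= m.
Proof.
move=> m0 hm; rewrite leqNgt; apply/negP => lt.
have := findex_iter lt; rewrite hm findex0 => e.
by rewrite -e in m0.
Qed.

Lemma iter_order_per x : fconnect f (f x) x -> iter (fingraph.order f x) f x = x.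
Proof. by move=> h; apply: (all_iffLR (@orbitPcycle _ f x) 2 4). Qed.

Lemma per_iter x k : iter k.+1 f x = x -> fconnect f (f x) x.
Proof. by move=> h; apply: (all_iffLR (@orbitPcycle _ f x) 3 2); exists k. Qed.

Lemma iter_per x : fconnect f (f x) x -> exists k, iter k.+1 f x = x.
Proof. by move=> h; apply: (all_iffLR (@orbitPcycle _ f x) 2 3). Qed.

Definition Pn n := [set x | fconnect f (f x) x && (fingraph.order f x == n)].

Lemma card_orbset x : #|[set y in fingraph.orbit f x]| = fingraph.order f x.
Proof. by rewrite cardsE (card_uniqP (orbit_uniq f x)) size_orbit. Qed.

Lemma card_cycles n : #|Pn n| = n * #|fcycles_of_length f n|.
Proof.
rewrite -sum1_card (partition_big (fun x => [set y in fingraph.orbit f x])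
   (mem (fcycles_of_length f n))); last first.
  move=> x; rewrite !inE => /andP[hx /eqP hn].
  rewrite card_orbset hn eqxx andbT; apply/existsP; exists x.
  by rewrite hx eqxx.
rewrite mulnC -sum_nat_const; apply: eq_bigr => C.
rewrite !inE => /andP[/existsP[x0 /andP[hx0 /eqP hC]] /eqP hn].
rewrite sum1_card.
have cyc : fcycle f (fingraph.orbit f x0) by rewrite -fconnect_f.
have x0o : x0 \in fingraph.orbit f x0 by [].
rewrite -hn; apply: eq_card => x; rewrite unfold_in /= !inE.
apply/idP/idP.
  by case/andP=> _ /eqP <-; rewrite inE.
rewrite hC inE => xo.
have e1 : fingraph.orbit f x =i fingraph.orbit f x0.
  move=> y; apply/idP/idP => hy; last by rewrite (in_orbit_cycle cyc xo hy).
  by move: xo hy; rewrite -!fconnect_orbit; apply: connect_trans.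
have -> : [set y in fingraph.orbit f x] = [set y in fingraph.orbit f x0].
  by apply/setP => y; rewrite !inE e1.
rewrite eqxx andbT fconnect_f (cycle_orbit_cycle cyc xo) /=.
by rewrite card_orbset (eq_order_cycle cyc x0o xo).
Qed.

End General.

Lemma sum_card_part (T : finType) (g : T -> nat) (s : seq nat) (P : pred nat) :
  uniq s ->
  \sum_(d <- s | P d) #|[set x | g x == d]| =
  #|[set x | (g x \in s) && P (g x)]|.
Proof.
elim: s => [|d s IH] /=.
  by move=> _; rewrite big_nil; apply: esym; apply/eqP; rewrite cards_eq0; apply/eqP/setP => x; rewrite !inE.
case/andP => dns us; rewrite big_cons IH //.
case Pd: (P d).
  rewrite -(cardsID [set x | g x == d] [set x | (g x \in d :: s) && P (g x)]).
  congr (_ + _); apply: eq_card => x; rewrite !inE.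
    by case: eqP => [->|]; rewrite ?eqxx ?Pd ?andbF ?andbT.
  case: eqP => [->|ne] /=; first by rewrite (negPf dns).
  by [].
apply: eq_card => x; rewrite !inE.
by case: eqP => [->|]; rewrite ?Pd ?andbF //= (negPf dns).
Qed.

Lemma mo_spec d : odd d ->
  [/\ 0 < mult_order d 2, d %| (2 ^ mult_order d 2).-1 &
      forall k, 0 < k -> d %| (2 ^ k).-1 -> mult_order d 2 <= k].
Proof.
move=> od.
have cop : coprime 2 d by rewrite coprime2n.
have E k : (2 ^ k == 1 %[mod d]) = (d %| (2 ^ k).-1).
  by rewrite eqn_mod_dvd ?expn_gt0 // subn1.
rewrite /mult_order; case: ex_minnP => m /andP[m0]; rewrite cop /= => hm hmin.
split => //; first by rewrite -E.
move=> k k0 hk; apply: hmin; rewrite /mult_order_pred k0 cop /= E //.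
Qed.

Lemma mo_dvd d k : odd d -> d %| (2 ^ k).-1 -> mult_order d 2 %| k.
Proof.
move=> od hk; have [m0 hm hmin] := mo_spec od.
set m := mult_order d 2 in m0 hm hmin *.
have E j : (2 ^ j == 1 %[mod d]) = (d %| (2 ^ j).-1).
  by rewrite eqn_mod_dvd ?expn_gt0 // subn1.
rewrite -E in hm; rewrite -E in hk.
have h2 : 2 ^ (k %% m) == 1 %[mod d].
  move: hk; rewrite {1}(divn_eq k m) expnD [_ %/ _ * _]mulnC expnM.
  by rewrite -modnMml -modnXm (eqP hm) modnXm exp1n modnMml mul1n.
case: (posnP (k %% m)) => [h0|pos]; first by apply/eqP.
have := hmin _ pos; rewrite -E h2 => /(_ isT).
by rewrite leqNgt ltn_pmod.
Qed.

Lemma card_roots_lt (F : finFieldType) (P : {poly F}) :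
  P != 0%R -> #|[set x | root P x]| < size P.
Proof.
move=> P0; rewrite cardE; apply: max_poly_roots => //.
  by apply/allP => x; rewrite mem_enum inE.
exact: enum_uniq.
Qed.

Lemma count_order (F : finFieldType) d : d %| #|F|.-1 ->
  #|[set w : {unit F} | #[w]%g == d]| = totient d.
Proof.
move=> hd.
have /cyclicP[a Ha] := field_unit_group_cyclic [set: {unit F}]%G.
have oa : #[a]%g = #|F|.-1 by rewrite /order -Ha card_finField_unit.
have d0 : 0 < d by apply: dvdn_gt0 hd; rewrite -oa order_gt0.
have [k hk] : exists k, #[a]%g = (k * d)%N by apply/dvdnP; rewrite oa.
have kd : k %| #[a]%g by rewrite hk dvdn_mulr.
have k0 : 0 < k by move: (order_gt0 a); rewrite hk muln_gt0 => /andP[].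
have ob : #[a ^+ k]%g = d by rewrite orderXdiv // hk mulKn.
rewrite -{2}ob totient_gen; apply: eq_card => x; rewrite !inE /generator.
have := eq_subG_cyclic (field_unit_group_cyclic [set: {unit F}]%G)
   (subsetT <[a ^+ k]>%G) (subsetT <[x]>%G).
rewrite /= => ->.
by rewrite -!orderE ob eq_sym.
Qed.

Section Field.
Local Open Scope ring_scope.
Variables (F : finFieldType) (q s r : nat) (c : F).
Hypothesis q2 : (2 < q)%N.
Hypothesis frobD : forall x y : F, (x + y) ^+ q = x ^+ q + y ^+ q.
Hypothesis cardF : #|F| = (q ^ 2)%N.
Hypothesis cq : c ^+ q = c.
Hypothesis c0 : c != 0.
Hypothesis hqr : q.-1 = (2 ^ s * r)%N.
Hypothesis odr : odd r.


Definition Tr (x : F) := x ^+ q + x.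
Definition fq (x : F) := c * (x ^+ q.+1 + x ^+ 2).

Lemma Fqq (x : F) : (x ^+ q) ^+ q = x.
Proof. by rewrite -exprM mulnn -cardF expf_card. Qed.

Lemma TrFix (x : F) : Tr x ^+ q = Tr x.
Proof. by rewrite /Tr frobD Fqq addrC. Qed.

Lemma uFix (x : F) : (c * Tr x) ^+ q = c * Tr x.
Proof. by rewrite exprMn cq TrFix. Qed.

Lemma fqE (x : F) : fq x = (c * Tr x) * x.
Proof. rewrite /fq /Tr exprS expr2; ring. Qed.

Lemma Tr0 : Tr 0 = 0.
Proof. by rewrite /Tr expr0n; case: q q2 => //= n _; rewrite addr0. Qed.

Lemma iter_fq k (x : F) : iter k fq x = (c * Tr x) ^+ (2 ^ k).-1 * x.
Proof.
elim: k x => [|k IH] x; first by rewrite expn0 /= expr0 mul1r.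
rewrite iterSr IH fqE.
set u := c * Tr x.
have -> : c * Tr (u * x) = u ^+ 2.
  rewrite {1}/Tr exprMn uFix expr2 /u /Tr; ring.
rewrite -exprM mulrA -exprSr; congr (_ ^+ _ * _).
have := expn_gt0 2 k; rewrite expnS; lia.
Qed.

Lemma fiber_le (t : F) : (#|[set x : F | Tr x == t]| <= q)%N.
Proof.
pose P : {poly F} := 'X^q + ('X - t%:P).
have sP : size P = q.+1.
  by rewrite /P size_polyDl ?size_polyXn // size_XsubC; lia.
have P0 : P != 0 by rewrite -size_poly_eq0 sP.
rewrite -ltnS -sP; apply: (leq_ltn_trans _ (card_roots_lt P0)).
apply: subset_leq_card; apply/subsetP => x; rewrite !inE /root /P !hornerE.
by rewrite subr_eq0.
Qed.

Lemma fix_le : (#|[set t : F | t ^+ q == t]| <= q)%N.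
Proof.
pose P : {poly F} := 'X^q - 'X.
have sP : size P = q.+1.
  by rewrite /P size_polyDl ?size_polyXn // size_polyN size_polyX; lia.
have P0 : P != 0 by rewrite -size_poly_eq0 sP.
rewrite -ltnS -sP; apply: (leq_ltn_trans _ (card_roots_lt P0)).
apply: subset_leq_card; apply/subsetP => x; rewrite !inE /root /P !hornerE.
by rewrite subr_eq0.
Qed.

Lemma fiber_eq (t : F) : t ^+ q = t -> #|[set x : F | Tr x == t]| = q.
Proof.
move=> ht.
pose Fix := [set t : F | t ^+ q == t].
pose N t := #|[set x : F | Tr x == t]|.
have tot : (\sum_(t in Fix) N t = q * q)%N.
  rewrite mulnn -cardF -sum1_card [in RHS](partition_big Tr (mem Fix)); last first.
    by move=> x _; change (Tr x \in Fix); rewrite inE TrFix.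
  apply: eq_bigr => y _; rewrite sum1_card /N; apply: eq_card => x.
  by rewrite !inE.
apply/eqP; rewrite eqn_leq fiber_le /= leqNgt; apply/negP => lt.
have t0 : t \in Fix by rewrite inE ht.
have : (\sum_(t in Fix) N t < \sum_(t in Fix) q)%N.
  rewrite (bigD1 t) //= [in X in (_ < X)%N](bigD1 t) //=.
  rewrite -addSn; apply: leq_add => //; apply: leq_sum => y _; exact: fiber_le.
rewrite tot sum_nat_const => h.
have := fix_le; rewrite -/Fix => h2.
have : (#|Fix| * q <= q * q)%N by rewrite leq_mul2r h2 orbT.
lia.
Qed.

Definition ux (x : F) : {unit F} := insubd (1%g : {unit F}) (c * Tr x).
Definition g (x : F) : nat := if c * Tr x == 0 then 0%N else #[ux x]%g.

Lemma val_ux (x : F) : c * Tr x != 0 -> val (ux x) = c * Tr x.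
Proof. by move=> h; rewrite /ux insubdK // unfold_in /= unitfE. Qed.

Lemma valw_fix (w : {unit F}) : (#[w]%g %| q.-1)%N -> val w ^+ q = val w.
Proof.
rewrite order_dvdn -val_eqE /= val_unitX => /eqP h.
by rewrite -(prednK (ltnW (ltnW q2))) exprSr h mul1r.
Qed.

Lemma ord_dvd (x : F) : c * Tr x != 0 -> (#[ux x]%g %| q.-1)%N.
Proof.
move=> u0; rewrite order_dvdn -val_eqE /= val_unitX val_ux //.
apply/eqP; apply: (mulIf u0); rewrite mul1r -exprSr prednK ?uFix //; lia.
Qed.

Lemma iter_eq (x : F) m : c * Tr x != 0 ->
  (iter m fq x == x) = (#[ux x]%g %| (2 ^ m).-1)%N.
Proof.
move=> u0.
have x0 : x != 0 by apply: contraNneq u0 => ->; rewrite Tr0 mulr0.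
rewrite iter_fq order_dvdn -val_eqE /= val_unitX val_ux //.
rewrite -[X in _ == X]mul1r; apply/eqP/eqP => [h|->] //; exact: (mulIf x0 h).
Qed.


Lemma odd_pow2 k : odd (2 ^ k.+1).-1.
Proof.
by rewrite expnS -(prednK (expn_gt0 2 k)) mul2n doubleS /= odd_double.
Qed.

Lemma r0 : (0 < r)%N.
Proof. by case: (r) odr. Qed.

Lemma nd0 : (0%N \in divisors r) = false.
Proof. by rewrite -dvdn_divisors ?r0 // dvd0n; case: (r) odr. Qed.

Lemma Pn_char n (x : F) : (0 < n)%N ->
  (x \in Pn fq n) =
  ((x == 0) && (n == 1%N)) || ((g x \in divisors r) && (mult_order (g x) 2 == n)).
Proof.
move=> n0.
have [->|x0] := eqVneq x 0.
  have f0 : fq 0 = 0 by rewrite fqE Tr0 !mulr0.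
  rewrite /g Tr0 mulr0 eqxx nd0 /= orbF inE f0 connect0 /=.
  have -> : fingraph.order fq 0 = 1%N.
    apply/eqP; rewrite eqn_leq fingraph.order_gt0 andbT; apply: order_le_iter => //.
  by rewrite eq_sym.
rewrite /=.
have [u0|u0] := eqVneq (c * Tr x) 0.
  rewrite /g u0 eqxx nd0 inE /=; apply/negbTE/negP => /andP[hp _].
  have [k hk] := iter_per hp.
  move: hk; rewrite iter_fq u0 expr0n.
  have -> : ((2 ^ k.+1).-1 == 0%N) = false.
    by apply/negbTE; rewrite -lt0n -subn1 subn_gt0 expnS; have := expn_gt0 2 k; lia.
  by rewrite mul0r => h; rewrite -h eqxx in x0.
rewrite /g (negPf u0) inE.
set d := #[ux x]%g.
have dq : (d %| q.-1)%N by apply: ord_dvd.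
case od : (odd d).
  have [m0 hm hmin] := mo_spec od.
  have dr : d \in divisors r.
    rewrite -dvdn_divisors ?r0 //; move: dq; rewrite hqr Gauss_dvdr //.
    by rewrite coprimeXr // coprime_sym coprime2n.
  rewrite dr /=.
  have itm : iter (mult_order d 2) fq x = x by apply/eqP; rewrite iter_eq.
  have per : fconnect fq (fq x) x.
    by apply: (@per_iter _ _ _ (mult_order d 2).-1); rewrite prednK.
  have -> : fingraph.order fq x = mult_order d 2.
    apply/eqP; rewrite eqn_leq order_le_iter //=.
    apply: hmin; first exact: fingraph.order_gt0.
    by rewrite -iter_eq // iter_order_per.
  by rewrite per.
have dr : (d \in divisors r) = false.
  rewrite -dvdn_divisors ?r0 //; apply/negP => h.
  by move: (dvdn_odd h odr); rewrite od.
rewrite dr /=; apply/negP => /andP [/iter_per [k hk] _].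
have : (d %| (2 ^ k.+1).-1)%N by rewrite -iter_eq // hk.
by move/dvdn_odd => /(_ (odd_pow2 k)); rewrite od.
Qed.

Lemma card_g d : (0 < d)%N -> (d %| q.-1)%N ->
  #|[set x | g x == d]| = (q * totient d)%N.
Proof.
move=> d0 dq.
rewrite -sum1_card (partition_big ux (fun w : {unit F} => #[w]%g == d)); last first.
  move=> x; rewrite inE /g; case: (c * Tr x == 0) => //.
  by move/eqP => e; rewrite -e in d0.
have dF : (d %| #|F|.-1)%N.
  rewrite cardF; apply: (dvdn_trans dq); apply/dvdnP; exists q.+1.
  rewrite -mulnn; case: (q) q2 => [|q'] //= _; nia.
rewrite -(count_order dF) mulnC -sum_nat_const.
apply: eq_big => [w|w hw]; first by rewrite inE.
rewrite sum1_card.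
have wfix : val w ^+ q = val w by apply: valw_fix; rewrite (eqP hw).
have wc : (val w / c) ^+ q = val w / c by rewrite exprMn exprVn cq wfix.
have w0 : val w != 0 by rewrite -unitfE (valP w).
rewrite -(fiber_eq wc); apply: eq_card => x; rewrite unfold_in /= !inE.
apply/idP/idP.
  case/andP => hg /eqP hw'.
  have u0 : c * Tr x != 0.
    by apply: contraTneq hg => e; rewrite /g e eqxx eq_sym -lt0n d0.
  by rewrite -hw' val_ux // [c * _]mulrC mulfK.
move/eqP => ht.
have e : c * Tr x = val w by rewrite ht mulrC divfK.
have u0 : c * Tr x != 0 by rewrite e.
have ex : ux x = w by apply: val_inj; rewrite val_ux.
by rewrite /g (negPf u0) ex (eqP hw) !eqxx.
Qed.

Lemma card_Pn n : (0 < n)%N ->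
  #|Pn fq n| = ((n == 1%N) + \sum_(d <- divisors r | mult_order d 2 == n) q * totient d)%N.
Proof.
move=> n0.
pose A := [set x : F | (x == 0) && (n == 1%N)].
rewrite -(cardsID A (Pn fq n)).
congr (_ + _)%N.
  have -> : Pn fq n :&: A = A.
    apply/setP => x; rewrite in_setI Pn_char // !inE.
    by case: ((x == 0) && (n == 1%N)); rewrite /= ?andbT ?andbF.
  case: (eqVneq n 1%N) => [n1|n1].
    have -> : A = [set 0] by apply/setP => x; rewrite /A !inE n1 eqxx andbT.
    by rewrite cards1.
  apply/eqP; rewrite cards_eq0; apply/eqP/setP => x.
  by rewrite /A !inE (negPf n1) andbF.
rewrite (_ : Pn fq n :\: A =
   [set x | (g x \in divisors r) && (mult_order (g x) 2 == n)]); last first.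
  apply/setP => x; rewrite in_setD Pn_char // !inE.
  case: (eqVneq x 0) => [->|x0] /=.
    by rewrite /g Tr0 mulr0 eqxx nd0 /=; case: (n == 1%N).
  by [].
rewrite -(sum_card_part g (fun d => mult_order d 2 == n) (divisors_uniq r)).
rewrite big_seq_cond [RHS]big_seq_cond; apply: eq_bigr => d /andP[dr _].
have dr' : (d %| r)%N by rewrite dvdn_divisors ?r0.
apply: card_g; first exact: dvdn_gt0 r0 dr'.
by rewrite hqr dvdn_mull.
Qed.

End Field.

Local Open Scope ring_scope.

Theorem theorem17 (F : finFieldType) (p e q s r : nat) (c : F) :
  prime p -> odd p -> (0 < e)%N -> q = (p ^ e)%N ->
  #|F| = (q ^ 2)%N ->
  q.-1 = (2 ^ s * r)%N -> odd r ->
  c != 0 -> c ^+ q = c ->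
  forall n : nat, (0 < n)%N ->
    #|fcycles_of_length (fun x : F => c * (x ^+ q.+1 + x ^+ 2)) n| =
    ((\sum_(d <- divisors r | mult_order d 2 == n) (q * totient d %/ n)) + (n == 1%N))%N.
Proof.
move=> pp op e0 hq cardF hqr odr c0 cq n n0.
have p3 : (2 < p)%N.
  have := prime_gt1 pp; rewrite leq_eqVlt => /orP[/eqP p2|] //.
  by rewrite -p2 in op.
have q2 : (2 < q)%N.
  rewrite hq; apply: (leq_trans p3); rewrite -{1}(expn1 p) leq_pexp2l //; lia.
have pc : p \in [pchar F].
  by apply: (@card_finPcharP _ _ (e * 2)) => //; rewrite cardF hq -expnM.
have frobD : forall x y : F, (x + y) ^+ q = x ^+ q + y ^+ q.
  move=> x y; apply: exprDn_pchar.
  by rewrite (eq_pnat _ (pcharf_eq pc)) hq pnatX pnat_id.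
have hcyc := card_cycles (fq q c) n.
rewrite (card_Pn q2 frobD cardF cq c0 hqr odr n0) in hcyc.
change (fun x : F => c * (x ^+ q.+1 + x ^+ 2)) with (fq q c).
set X := #|fcycles_of_length (fq q c) n| in hcyc *.
set S := (\sum_(d <- divisors r | mult_order d 2 == n) q * totient d)%N in hcyc.
have r0 : (0 < r)%N by case: (r) odr.
have hdiv : forall d, d \in divisors r -> mult_order d 2 == n ->
    (n %| q * totient d)%N.
  move=> d dr /eqP <-; apply: dvdn_mull.
  have dr' : (d %| r)%N by rewrite dvdn_divisors.
  have od : odd d := dvdn_odd dr' odr.
  apply: mo_dvd => //.
  rewrite -subn1 -eqn_mod_dvd ?expn_gt0 //; apply/eqP; apply: Euler_exp_totient.
  by rewrite coprime2n.
have hS : ((\sum_(d <- divisors r | mult_order d 2 == n) (q * totient d %/ n)) * n = S)%N.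
  rewrite big_distrl /= /S big_seq_cond [RHS]big_seq_cond.
  by apply: eq_bigr => d /andP[dr hd]; rewrite divnK // hdiv.
case: (eqVneq n 1%N) => [n1|n1].
  subst n; rewrite mul1n in hcyc; rewrite -hcyc addnC; congr (_ + _)%N.
  by rewrite /S; apply: eq_bigr => d _; rewrite divn1.
rewrite (negPf n1) add0n in hcyc.
move: hS; rewrite hcyc mulnC => /eqP; rewrite eqn_pmul2l // => /eqP ->.
by rewrite addn0.
Qed.
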